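(* Consider the system $$\dot x=-y+x(x^3+xy^2)+\sum_{k=1}^2\varepsilon^k\Big(\lambda_kx+\sum_{i+j=4}a_{k,i,j}x^iy^j\Big),\qquad \dot y=x+y(x^3+xy^2)+\sum_{k=1}^2\varepsilon^k\Big(\lambda_ky+\sum_{i+j=4}b_{k,i,j}x^iy^j\Big),$$ and assume $a_{1,1,3}=b_{1,0,4}$, $a_{1,3,1}=b_{1,2,2}$, $b_{1,4,0}=\lambda_1=0$. Then for $z\in(0,3^{-1/3})$ the function $y_1$ has the form $$y_1(\theta,z)=\frac{1}{14580\,z^{11}(1-3z^3\sin\theta)^{4/3}}\Big(m_1(z)\ln(1-3z^3\sin\theta)+R(\theta,z)\Big),$$ where $R$ is a polynomial in $\cos\theta$, $\sin\theta$ and $z$, and $$m_1(z)=1620(b_{1,3,1}-a_{1,4,0})z^{12}+180(-a_{1,2,2}+2a_{1,4,0}+b_{1,1,3}-2b_{1,3,1})z^6+20(a_{1,2,2}-a_{1,0,4}-a_{1,4,0}-b_{1,1,3}+b_{1,3,1}).$$ Moreover the logarithmic term vanishes identically (i.e. $m_1\equiv0$ on $(0,3^{-1/3})$) if and only if $a_{1,2,2}=b_{1,1,3}$, $a_{1,4,0}=b_{1,3,1}$, and $a_{1,0,4}=0$.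
   Context: Write the system in polar coordinates $x=r\cos\theta,y=r\sin\theta$ and expand $dr/d\theta=F_0(\theta,r)+\varepsilon F_1(\theta,r)+O(\varepsilon^2)$, where $F_0=r^4\cos\theta$. Let $r(\theta,z)=z(1-3z^3\sin\theta)^{-1/3}$ (solution of $dr/d\theta=F_0$, $r(0)=z$) and $Y(\theta,z)=(1-3z^3\sin\theta)^{-4/3}$ (solution of $Y'=\partial_rF_0(\theta,r(\theta,z))Y$, $Y(0)=1$). Define $y_1(\theta,z)=Y(\theta,z)\int_0^\theta Y(s,z)^{-1}F_1(s,r(s,z))\,ds$. *)

(* Defs.v *)
From Stdlib Require Import Reals.
From Coquelicot Require Import Coquelicot.
Open Scope R_scope.

Definition hom4 (c : nat -> nat -> R) (x y : R) : R :=
  sum_f_R0 (fun i => c i (4 - i)%nat * x ^ i * y ^ (4 - i)) 4.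

Definition xdot (lam : nat -> R) (a b : nat -> nat -> nat -> R) (eps x y : R) : R :=
  - y + x * (x ^ 3 + x * y ^ 2)
  + eps * (lam 1%nat * x + hom4 (a 1%nat) x y)
  + eps ^ 2 * (lam 2%nat * x + hom4 (a 2%nat) x y).

Definition ydot (lam : nat -> R) (a b : nat -> nat -> nat -> R) (eps x y : R) : R :=
  x + y * (x ^ 3 + x * y ^ 2)
  + eps * (lam 1%nat * y + hom4 (b 1%nat) x y)
  + eps ^ 2 * (lam 2%nat * y + hom4 (b 2%nat) x y).

(* dr/dtheta of the system in polar coordinates x = r cos th, y = r sin th:
   dr/dth = rdot / thdot = r (cos th xdot + sin th ydot) / (cos th ydot - sin th xdot). *)
Definition drdth (lam : nat -> R) (a b : nat -> nat -> nat -> R) (eps th r : R) : R :=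
  let x := r * cos th in
  let y := r * sin th in
  r * (cos th * xdot lam a b eps x y + sin th * ydot lam a b eps x y)
    / (cos th * ydot lam a b eps x y - sin th * xdot lam a b eps x y).

Definition F0 (th r : R) : R := r ^ 4 * cos th.

(* F1 = coefficient of eps in the expansion dr/dth = F0 + eps F1 + O(eps^2) *)
Definition F1 (lam : nat -> R) (a b : nat -> nat -> nat -> R) (th r : R) : R :=
  Derive (fun eps => drdth lam a b eps th r) 0.

Definition rsol (th z : R) : R := z * Rpower (1 - 3 * z ^ 3 * sin th) (-1/3).
Definition Ysol (th z : R) : R := Rpower (1 - 3 * z ^ 3 * sin th) (-4/3).

Definition y1 (lam : nat -> R) (a b : nat -> nat -> nat -> R) (th z : R) : R :=
  Ysol th z * RInt (fun s => / Ysol s z * F1 lam a b s (rsol s z)) 0 th.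

Definition m1 (a b : nat -> nat -> nat -> R) (z : R) : R :=
  1620 * (b 1%nat 3%nat 1%nat - a 1%nat 4%nat 0%nat) * z ^ 12
  + 180 * (- a 1%nat 2%nat 2%nat + 2 * a 1%nat 4%nat 0%nat + b 1%nat 1%nat 3%nat
           - 2 * b 1%nat 3%nat 1%nat) * z ^ 6
  + 20 * (a 1%nat 2%nat 2%nat - a 1%nat 0%nat 4%nat - a 1%nat 4%nat 0%nat
          - b 1%nat 1%nat 3%nat + b 1%nat 3%nat 1%nat).

Definition is_poly_cos_sin_z (Rp : R -> R -> R) : Prop :=
  exists (n : nat) (c : nat -> nat -> nat -> R), forall th z,
    Rp th z = sum_f_R0 (fun i => sum_f_R0 (fun j => sum_f_R0 (fun k =>
                c i j k * cos th ^ i * sin th ^ j * z ^ k) n) n) n.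

(* Main.v *)
Require Import Defs.
From Stdlib Require Import Reals Lra.
From Coquelicot Require Import Coquelicot.
Open Scope R_scope.

Definition HA (k : nat -> nat -> R) (c s : R) : R :=
  k 0%nat 4%nat * s^4 + k 1%nat 3%nat * c * s^3 + k 2%nat 2%nat * c^2 * s^2
  + k 3%nat 1%nat * c^3 * s + k 4%nat 0%nat * c^4.

Lemma hom4_eq (k : nat -> nat -> R) r c s :
  hom4 k (r*c) (r*s) = r^4 * HA k c s.
Proof. unfold hom4, HA; simpl; ring. Qed.

Lemma quot_der (f g : R -> R) df dg f0 g0 v :
  is_derive f 0 df -> is_derive g 0 dg -> f 0 = f0 -> g 0 = g0 -> g0 <> 0 ->
  (df*g0 - f0*dg)/g0^2 = v -> is_derive (fun t => f t / g t) 0 v.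
Proof.
  intros Hf Hg Hf0 Hg0 Hn Hv. rewrite <- Hv, <- Hf0, <- Hg0.
  apply is_derive_div; auto. now rewrite Hg0.
Qed.

Lemma cs1 th : cos th ^ 2 + sin th ^ 2 = 1.
Proof. rewrite <- (sin2_cos2 th); unfold Rsqr; ring. Qed.

Lemma F1_eq lam a b th r : lam 1%nat = 0 -> r <> 0 ->
  F1 lam a b th r =
   r^4 * (cos th * HA (a 1%nat) (cos th) (sin th) + sin th * HA (b 1%nat) (cos th) (sin th))
   - r^7 * cos th * (cos th * HA (b 1%nat) (cos th) (sin th) - sin th * HA (a 1%nat) (cos th) (sin th)).
Proof.
  intros Hl Hr. unfold F1. apply is_derive_unique.
  unfold drdth; cbv zeta.
  pose proof (cs1 th) as Hcs.
  set (c := cos th) in *; set (s := sin th) in *.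
  eapply quot_der with
    (df := r * (c * (lam 1%nat * (r*c) + hom4 (a 1%nat) (r*c) (r*s))
              + s * (lam 1%nat * (r*s) + hom4 (b 1%nat) (r*c) (r*s))))
    (dg := c * (lam 1%nat * (r*s) + hom4 (b 1%nat) (r*c) (r*s))
         - s * (lam 1%nat * (r*c) + hom4 (a 1%nat) (r*c) (r*s)))
    (f0 := r^5 * c) (g0 := r).
  - unfold xdot, ydot. auto_derive; [easy | ring].
  - unfold xdot, ydot. auto_derive; [easy | ring].
  - cbv beta; unfold xdot, ydot. transitivity (r^5*c*(c^2+s^2)^2); [ring | rewrite Hcs; ring].
  - cbv beta; unfold xdot, ydot. transitivity (r*(c^2+s^2)); [ring | rewrite Hcs; ring].
  - exact Hr.
  - rewrite Hl, !hom4_eq. field. exact Hr.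
Qed.

Definition RpG (a0 a2 a4 b0 b1 b2 b3 c s z : R) : R :=
  ((4860)*b2 + (9720)*b0) * c ^ 0 * s ^ 0 * z ^ 15 + ((60)*b3 + (-60)*b1 + (-60)*a4 + (60)*a2 + (-60)*a0) * c ^ 0 * s ^ 1 * z ^ 3 + ((-1080)*b3 + (540)*b1 + (1080)*a4 + (-540)*a2) * c ^ 0 * s ^ 1 * z ^ 9 + ((4860)*b3 + (9720)*a4) * c ^ 0 * s ^ 1 * z ^ 15 + ((90)*b3 + (-90)*b1 + (-90)*a4 + (90)*a2 + (-90)*a0) * c ^ 0 * s ^ 2 * z ^ 6 + ((-1620)*b3 + (810)*b1 + (1620)*a4 + (-810)*a2) * c ^ 0 * s ^ 2 * z ^ 12 + ((180)*b3 + (-180)*b1 + (-180)*a4 + (180)*a2 + (-180)*a0) * c ^ 0 * s ^ 3 * z ^ 9 + ((1620)*b3 + (1620)*b1 + (-6480)*a4 + (3240)*a2) * c ^ 0 * s ^ 3 * z ^ 15 + ((405)*b3 + (-405)*b1 + (-405)*a4 + (405)*a2 + (-405)*a0) * c ^ 0 * s ^ 4 * z ^ 12 + ((-1944)*b3 + (1944)*b1 + (1944)*a4 + (-1944)*a2 + (1944)*a0) * c ^ 0 * s ^ 5 * z ^ 15 + ((-4860)*b2 + (-9720)*b0) * c ^ 1 * s ^ 0 * z ^ 15 + ((4860)*b2 + (-4860)*b0) * c ^ 1 * s ^ 2 * z ^ 15.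

Definition RpdG (a0 a2 a4 b0 b1 b2 b3 c s z : R) : R :=
  (4860)*s*z^15*b2 + (9720)*s*z^15*b0 + (-4860)*s^3*z^15*b2 + (4860)*s^3*z^15*b0 + (60)*c*z^3*b3 + (-60)*c*z^3*b1 + (-60)*c*z^3*a4 + (60)*c*z^3*a2 + (-60)*c*z^3*a0 + (-1080)*c*z^9*b3 + (540)*c*z^9*b1 + (1080)*c*z^9*a4 + (-540)*c*z^9*a2 + (4860)*c*z^15*b3 + (9720)*c*z^15*a4 + (180)*c*s*z^6*b3 + (-180)*c*s*z^6*b1 + (-180)*c*s*z^6*a4 + (180)*c*s*z^6*a2 + (-180)*c*s*z^6*a0 + (-3240)*c*s*z^12*b3 + (1620)*c*s*z^12*b1 + (3240)*c*s*z^12*a4 + (-1620)*c*s*z^12*a2 + (540)*c*s^2*z^9*b3 + (-540)*c*s^2*z^9*b1 + (-540)*c*s^2*z^9*a4 + (540)*c*s^2*z^9*a2 + (-540)*c*s^2*z^9*a0 + (4860)*c*s^2*z^15*b3 + (4860)*c*s^2*z^15*b1 + (-19440)*c*s^2*z^15*a4 + (9720)*c*s^2*z^15*a2 + (1620)*c*s^3*z^12*b3 + (-1620)*c*s^3*z^12*b1 + (-1620)*c*s^3*z^12*a4 + (1620)*c*s^3*z^12*a2 + (-1620)*c*s^3*z^12*a0 + (-9720)*c*s^4*z^15*b3 + (9720)*c*s^4*z^15*b1 + (9720)*c*s^4*z^15*a4 + (-9720)*c*s^4*z^15*a2 + (9720)*c*s^4*z^15*a0 + (9720)*c^2*s*z^15*b2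 + (-9720)*c^2*s*z^15*b0.

Definition QqG (a0 a2 a4 b0 b1 b2 b3 c s z : R) : R :=
  (-4860)*s*z^15*b2 + (-9720)*s*z^15*b0 + (14580)*s^2*z^18*b2 + (29160)*s^2*z^18*b0 + (-14580)*s^3*z^15*b0 + (43740)*s^4*z^18*b0 + (-14580)*c*z^15*a4 + (14580)*c*s*z^18*b3 + (29160)*c*s*z^18*a4 + (-14580)*c*s^2*z^15*b3 + (14580)*c*s^2*z^15*a4 + (-14580)*c*s^2*z^15*a2 + (29160)*c*s^3*z^18*b3 + (14580)*c*s^3*z^18*b1 + (-29160)*c*s^3*z^18*a4 + (29160)*c*s^3*z^18*a2 + (-14580)*c^2*s*z^15*b2 + (43740)*c^2*s^2*z^18*b2 + (-14580)*c^3*z^15*a4 + (14580)*c^3*s*z^18*b3 + (29160)*c^3*s*z^18*a4.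


Definition m1G (a0 a2 a4 b1 b3 z : R) : R :=
  1620 * (b3 - a4) * z ^ 12 + 180 * (- a2 + 2 * a4 + b1 - 2 * b3) * z ^ 6
  + 20 * (a2 - a0 - a4 - b1 + b3).

Definition AgG (a0 a2 a4 b0 b2 c s : R) : R :=
  a0*s^4 + b0*c*s^3 + a2*c^2*s^2 + b2*c^3*s + a4*c^4.
Definition BgG (b0 b1 b2 b3 c s : R) : R :=
  b0*s^4 + b1*c*s^3 + b2*c^2*s^2 + b3*c^3*s.

Lemma key a0 a2 a4 b0 b1 b2 b3 c s z :
  c^2 + s^2 = 1 -> z <> 0 -> 1 - 3*z^3*s <> 0 ->
  (m1G a0 a2 a4 b1 b3 z * (-(3*z^3*c)) / (1 - 3*z^3*s) + RpdG a0 a2 a4 b0 b1 b2 b3 c s z)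
    / (14580 * z^11)
  = z^4 * (c * AgG a0 a2 a4 b0 b2 c s + s * BgG b0 b1 b2 b3 c s)
    - z^7 * c * (c * BgG b0 b1 b2 b3 c s - s * AgG a0 a2 a4 b0 b2 c s) / (1 - 3*z^3*s).
Proof.
  intros Hcs Hz Hu.
  set (num := m1G a0 a2 a4 b1 b3 z * (-(3*z^3*c)) + RpdG a0 a2 a4 b0 b1 b2 b3 c s z * (1 - 3*z^3*s)
     - 14580 * z^15 * (c * AgG a0 a2 a4 b0 b2 c s + s * BgG b0 b1 b2 b3 c s) * (1 - 3*z^3*s)
     + 14580 * z^18 * c * (c * BgG b0 b1 b2 b3 c s - s * AgG a0 a2 a4 b0 b2 c s)).
  assert (Hn : num = 0).
  { transitivity (QqG a0 a2 a4 b0 b1 b2 b3 c s z * (c^2 + s^2 - 1)).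
    - unfold num, m1G, RpdG, AgG, BgG, QqG. ring.
    - rewrite Hcs. ring. }
  transitivity (z^4 * (c * AgG a0 a2 a4 b0 b2 c s + s * BgG b0 b1 b2 b3 c s)
    - z^7 * c * (c * BgG b0 b1 b2 b3 c s - s * AgG a0 a2 a4 b0 b2 c s) / (1 - 3*z^3*s)
    + num / (14580 * z^11 * (1 - 3*z^3*s))).
  - unfold num. field. auto.
  - rewrite Hn. field. auto.
Qed.

Definition Rpf (a b : nat -> nat -> nat -> R) (th z : R) : R :=
  RpG (a 1%nat 0%nat 4%nat) (a 1%nat 2%nat 2%nat) (a 1%nat 4%nat 0%nat)
      (b 1%nat 0%nat 4%nat) (b 1%nat 1%nat 3%nat) (b 1%nat 2%nat 2%nat) (b 1%nat 3%nat 1%nat)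
      (cos th) (sin th) z.

Definition Gf a b z th :=
  (m1 a b z * ln (1 - 3 * z ^ 3 * sin th) + Rpf a b th z) / (14580 * z ^ 11).

Definition Iexp (a b : nat -> nat -> nat -> R) z th :=
  z^4 * (cos th * HA (a 1%nat) (cos th) (sin th) + sin th * HA (b 1%nat) (cos th) (sin th))
  - z^7 * cos th * (cos th * HA (b 1%nat) (cos th) (sin th) - sin th * HA (a 1%nat) (cos th) (sin th))
    / (1 - 3 * z ^ 3 * sin th).

Lemma u_pos z th : 0 < z -> 3 * z^3 < 1 -> 0 < 1 - 3 * z ^ 3 * sin th.
Proof.
  intros Hz Hz3. destruct (SIN_bound th) as [_ Hs].
  assert (0 < z^3) by (apply pow_lt; lra).
  assert (z^3 * sin th <= z^3 * 1) by (apply Rmult_le_compat_l; lra).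
  lra.
Qed.

Lemma integrand_eq lam a b z th : lam 1%nat = 0 -> 0 < z -> 3 * z^3 < 1 ->
  / Ysol th z * F1 lam a b th (rsol th z) = Iexp a b z th.
Proof.
  intros Hl Hz Hz3. pose proof (u_pos z th Hz Hz3) as Hu.
  unfold Ysol, rsol.
  set (u := 1 - 3 * z ^ 3 * sin th) in *.
  assert (Hp : 0 < Rpower u (-1/3)) by (unfold Rpower; apply exp_pos).
  assert (H4 : Rpower u (-4/3) = Rpower u (-1/3) ^ 4).
  { rewrite <- Rpower_pow by exact Hp. rewrite Rpower_mult. f_equal. simpl. field. }
  assert (H3 : u = / Rpower u (-1/3) ^ 3).
  { rewrite <- Rpower_pow by exact Hp. rewrite Rpower_mult.
    replace (-1/3 * INR 3) with (Ropp 1) by (simpl; field).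
    rewrite Rpower_Ropp, Rpower_1 by exact Hu. field. lra. }
  rewrite F1_eq by (auto; apply Rmult_integral_contrapositive_currified; lra).
  rewrite H4. unfold Iexp. fold u.
  set (p := Rpower u (-1/3)) in *. rewrite H3.
  field. lra.
Qed.

Lemma G_der a b z th :
  a 1%nat 1%nat 3%nat = b 1%nat 0%nat 4%nat ->
  a 1%nat 3%nat 1%nat = b 1%nat 2%nat 2%nat ->
  b 1%nat 4%nat 0%nat = 0 ->
  0 < z -> 3 * z^3 < 1 -> is_derive (Gf a b z) th (Iexp a b z th).
Proof.
  intros H1 H2 H3 Hz Hz3. pose proof (u_pos z th Hz Hz3) as Hu.
  pose proof (cs1 th) as Hcs.
  pose proof (key (a 1%nat 0%nat 4%nat) (a 1%nat 2%nat 2%nat) (a 1%nat 4%nat 0%nat)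
      (b 1%nat 0%nat 4%nat) (b 1%nat 1%nat 3%nat) (b 1%nat 2%nat 2%nat) (b 1%nat 3%nat 1%nat)
      (cos th) (sin th) z Hcs ltac:(lra) ltac:(lra)) as K.
  unfold Gf, Rpf, RpG. auto_derive.
  - simpl in Hu. lra.
  - match type of K with ?L = _ => transitivity L end.
    + unfold m1G, m1, RpdG. field; repeat split; try lra; simpl in Hu; try lra.
    + rewrite K. unfold Iexp, HA, AgG, BgG. rewrite H1, H2, H3. field. lra.
Qed.

From Stdlib Require Import Lia.

Definition polyN (N : nat) (f : R -> R -> R) : Prop :=
  exists (c : nat -> nat -> nat -> R), forall th z,
    f th z = sum_f_R0 (fun i => sum_f_R0 (fun j => sum_f_R0 (fun k =>
                c i j k * cos th ^ i * sin th ^ j * z ^ k) N) N) N.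

Lemma polyN_is N f : polyN N f -> is_poly_cos_sin_z f.
Proof. intros [c Hc]. exists N, c. exact Hc. Qed.

Lemma polyN_add N f g : polyN N f -> polyN N g -> polyN N (fun th z => f th z + g th z).
Proof.
  intros [c1 H1] [c2 H2]. exists (fun i j k => c1 i j k + c2 i j k).
  intros th z. rewrite H1, H2.
  rewrite <- sum_plus; apply sum_eq; intros.
  rewrite <- sum_plus; apply sum_eq; intros.
  rewrite <- sum_plus; apply sum_eq; intros. ring.
Qed.

Lemma sum_zero f n : (forall i, (i <= n)%nat -> f i = 0) -> sum_f_R0 f n = 0.
Proof.
  induction n; simpl; intros H.
  - apply H; lia.
  - rewrite IHn, H; [ring | lia | intros; apply H; lia].
Qed.

Lemma sum_one f n i : (i <= n)%nat -> (forall j, (j <= n)%nat -> j <> i -> f j = 0) ->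
  sum_f_R0 f n = f i.
Proof.
  induction n; intros Hi H; simpl.
  - assert (i = 0)%nat by lia; subst; reflexivity.
  - destruct (Nat.eq_dec i (S n)) as [->|Hne].
    + rewrite sum_zero; [ring|]. intros j Hj; apply H; lia.
    + rewrite IHn by (try lia; intros; apply H; lia).
      rewrite (H (S n)) by lia. ring.
Qed.

Lemma polyN_mono N K i j l : (i <= N)%nat -> (j <= N)%nat -> (l <= N)%nat ->
  polyN N (fun th z => K * cos th ^ i * sin th ^ j * z ^ l).
Proof.
  intros Hi Hj Hl.
  exists (fun i' j' l' => if (Nat.eqb i' i && Nat.eqb j' j && Nat.eqb l' l)%bool then K else 0).
  intros th z.
  rewrite (sum_one _ N i Hi).
  2:{ intros i' _ Hne. apply sum_zero; intros; apply sum_zero; intros.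
      rewrite (proj2 (Nat.eqb_neq _ _) Hne). simpl. ring. }
  rewrite (sum_one _ N j Hj).
  2:{ intros j' _ Hne. apply sum_zero; intros.
      rewrite (proj2 (Nat.eqb_neq _ _) Hne), Nat.eqb_refl. simpl. ring. }
  rewrite (sum_one _ N l Hl).
  2:{ intros l' _ Hne.
      rewrite (proj2 (Nat.eqb_neq _ _) Hne), !Nat.eqb_refl. simpl. ring. }
  rewrite !Nat.eqb_refl. simpl. ring.
Qed.

Lemma Rpf_poly a b : is_poly_cos_sin_z (Rpf a b).
Proof.
  apply (polyN_is 15). unfold Rpf, RpG.
  repeat apply polyN_add; apply polyN_mono; lia.
Qed.

Lemma zbound z : 0 < z < Rpower 3 (-1/3) -> 3 * z^3 < 1.
Proof.
  intros [Hz Hq].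
  assert (Hp : 0 < Rpower 3 (-1/3)) by (unfold Rpower; apply exp_pos).
  assert (H3 : Rpower 3 (-1/3) ^ 3 = / 3).
  { rewrite <- Rpower_pow by exact Hp. rewrite Rpower_mult.
    replace (-1/3 * INR 3) with (Ropp 1) by (simpl; field).
    rewrite Rpower_Ropp, Rpower_1 by lra. reflexivity. }
  set (q := Rpower 3 (-1/3)) in *.
  assert (z^3 < q^3).
  { assert (0 < (q - z) * (q^2 + q*z + z^2)) by (apply Rmult_lt_0_compat; nra).
    nra. }
  lra.
Qed.

Lemma q_half : 1/2 < Rpower 3 (-1/3).
Proof.
  assert (Hp : 0 < Rpower 3 (-1/3)) by (unfold Rpower; apply exp_pos).
  assert (H3 : Rpower 3 (-1/3) ^ 3 = / 3).
  { rewrite <- Rpower_pow by exact Hp. rewrite Rpower_mult.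
    replace (-1/3 * INR 3) with (Ropp 1) by (simpl; field).
    rewrite Rpower_Ropp, Rpower_1 by lra. reflexivity. }
  set (q := Rpower 3 (-1/3)) in *.
  destruct (Rlt_or_le (1/2) q) as [h|h]; auto.
  assert (q^3 <= (1/2)^3) by (apply pow_incr; lra).
  rewrite H3 in H. simpl in H. lra.
Qed.

Lemma part2 a b :
  (forall z, 0 < z < Rpower 3 (-1/3) -> m1 a b z = 0) <->
   (a 1%nat 2%nat 2%nat = b 1%nat 1%nat 3%nat /\
    a 1%nat 4%nat 0%nat = b 1%nat 3%nat 1%nat /\
    a 1%nat 0%nat 4%nat = 0).
Proof.
  pose proof q_half as Hq. split.
  - intros H.
    pose proof (H (1/2) ltac:(lra)) as E1.
    pose proof (H (1/4) ltac:(lra)) as E2.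
    pose proof (H (1/8) ltac:(lra)) as E3.
    unfold m1 in E1, E2, E3. simpl in E1, E2, E3.
    repeat split; lra.
  - intros [h1 [h2 h3]] z _. unfold m1. rewrite h1, h2, h3. ring.
Qed.

Theorem mainTheorem9 (lam : nat -> R) (a b : nat -> nat -> nat -> R) :
  a 1%nat 1%nat 3%nat = b 1%nat 0%nat 4%nat ->
  a 1%nat 3%nat 1%nat = b 1%nat 2%nat 2%nat ->
  b 1%nat 4%nat 0%nat = 0 ->
  lam 1%nat = 0 ->
  (exists Rp : R -> R -> R, is_poly_cos_sin_z Rp /\
     forall th z, 0 < z < Rpower 3 (-1/3) ->
       y1 lam a b th z =
         / (14580 * z ^ 11 * Rpower (1 - 3 * z ^ 3 * sin th) (4/3))
         * (m1 a b z * ln (1 - 3 * z ^ 3 * sin th) + Rp th z))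
  /\
  ((forall z, 0 < z < Rpower 3 (-1/3) -> m1 a b z = 0) <->
   (a 1%nat 2%nat 2%nat = b 1%nat 1%nat 3%nat /\
    a 1%nat 4%nat 0%nat = b 1%nat 3%nat 1%nat /\
    a 1%nat 0%nat 4%nat = 0)).
Proof.
  intros H1 H2 H3 Hl. split; [|apply part2].
  exists (Rpf a b). split; [apply Rpf_poly|].
  intros th z Hzr. pose proof (zbound z Hzr) as Hz3.
  destruct Hzr as [Hz _].
  unfold y1.
  rewrite (RInt_ext _ (Iexp a b z)).
  2:{ intros x _. apply integrand_eq; auto. }
  rewrite (is_RInt_unique _ _ _ _ (is_RInt_derive (Gf a b z) (Iexp a b z) 0 th
            (fun x _ => G_der a b z x H1 H2 H3 Hz Hz3)
            (fun x _ => ex_derive_continuous (Iexp a b z) x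
               ltac:(unfold Iexp, HA; pose proof (u_pos z x Hz Hz3) as Hu;
                     auto_derive; simpl in Hu; lra)))).
  change (minus (Gf a b z th) (Gf a b z 0)) with (Gf a b z th - Gf a b z 0).
  assert (G0 : Gf a b z 0 = 0).
  { unfold Gf, Rpf, RpG. rewrite sin_0, cos_0.
    replace (1 - 3 * z^3 * 0) with 1 by ring. rewrite ln_1. field. lra. }
  rewrite G0. unfold Gf, Ysol.
  pose proof (u_pos z th Hz Hz3) as Hu.
  replace (-4/3) with (- (4/3)) by field. rewrite Rpower_Ropp.
  assert (0 < Rpower (1 - 3 * z ^ 3 * sin th) (4/3)) by (unfold Rpower; apply exp_pos).
  field. split; lra.
Qed.
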